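(* For every $d$ with $0\le d\le\rho(m)-1$, the sequence $(w(n,d))_{n\ge0}$ has transient length $\rho(m)\,(k-p_d-1)+d+1$ and cycle length $L_0(d)$.
   Context: For $u\in\mathbb{R}$ let $\mathbf 1[u]=1$ if $u\ge 0$ and $\mathbf 1[u]=0$ if $u<0$. For a $\{0,1\}$-valued sequence $(s(n))_{n\ge0}$ that is eventually periodic, its transient length is the least $T\ge0$ such that there is $P\ge1$ with $s(n+P)=s(n)$ for all $n\ge T$, and its cycle length is the least such $P$ (for that $T$). Let $m$ be a positive integer and let $\rho(m)$ denote the number of primes $p$ with $2m<p<3m$; assume $\rho(m)\ge 2$. List these primes as $p_0>p_1>\dots>p_{\rho(m)-1}$ and put $\alpha_i=3m-p_i$. Let $k=(6m-1)\rho(m)$, $\mu_i=\lfloor k/p_i\rfloor$, $\beta_i=k-p_i\mu_i$. Define weights $\bar a_j$, $1\le j\le k$: if $\rho(m)$ is even, $\bar a_j=2$ if $j=\ell p_i$ for some $i$ and some $\ell$ with $1\le \ell\le 3\rho(m)/2$, $\bar a_j=-2$ if $j=\ell p_i$ with $3\rho(m)/2<\ell\le 2\rho(m)$, and $\bar a_j=0$ otherwise; if $\rho(m)$ is odd, $\bar a_j=2$ if $j=\ell p_i$ with $1\le\ell\le (3\rho(m)-1)/2$, $\bar a_j=-2$ if $j=\ell p_i$ with $(3\rho(m)+1)/2\le \ell\le 2\rho(m)-2$, $\bar a_j=-1$ if $j=\ell p_i$ with $\ell\in\{2\rho(m)-1,2\rho(m)\}$, and $\bar a_j=0$ otherwise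 (well defined since the sets $\{\ell p_i:1\le\ell\le2\rho(m)\}$ are pairwise disjoint). Let $\bar\theta=2\rho(m)$. For each $i$ define $x^{\alpha_i}(t)$ for $0\le t\le k-1$ by $x^{\alpha_i}(t)=1$ if $t=\beta_i+\ell p_i$ for some $0\le \ell\le\mu_i-1$ and $x^{\alpha_i}(t)=0$ otherwise, and for $t\ge k$ by $x^{\alpha_i}(t)=\mathbf 1\big[\sum_{j=1}^k \bar a_j x^{\alpha_i}(t-j)-\bar\theta\big]$. Let $h=\rho(m)k$. For $1\le f\le h$ let $b_f=\bar a_j$ if $f=\rho(m)j$ with $1\le j\le k$, and $b_f=0$ otherwise. Define $(y(n))_{n\ge0}$ by $y(\rho(m)j+i)=x^{\alpha_i}(1+j)$ for $0\le j\le k-1$, $0\le i\le\rho(m)-1$, and $y(n)=\mathbf 1\big[\sum_{f=1}^h b_f y(n-f)-\bar\theta\big]$ for $n\ge h$. Let $L_1(d)=\rho(m)\cdot\mathrm{lcm}(p_0,\dots,p_d)$ for $0\le d\le\rho(m)-1$; let $L_0(d)=\rho(m)\cdot\mathrm{lcm}(p_{d+1},\dots,p_{\rho(m)-1})$ if $0\le d\le\rho(m)-2$ and $L_0(\rho(m)-1)=1$. For $0\le d\le\rho(m)-1$ define $(w(n,d))_{n\ge0}$ by: for $0\le i\le d$, $w(\rho(m)j+i,d)=x^{\alpha_i}(1+j)$ for $0\le j\le k-2$ and $w(\rho(m)(k-1)+i,d)=1-x^{\alpha_i}(k)$; for $d+1\le i\le\rho(m)-1$ and $0\le j\le k-1$,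 $w(\rho(m)j+i,d)=y(\rho(m)j+i+L_1(d))$; and $w(n,d)=\mathbf 1\big[\sum_{f=1}^h b_f w(n-f,d)-\bar\theta\big]$ for $n\ge h$. *)

(* Defs.v *)
From HB Require Import structures.
From mathcomp Require Import all_boot all_order all_algebra.
Set Implicit Arguments. Unset Strict Implicit. Unset Printing Implicit Defensive.
Import GRing.Theory Num.Theory.

(* s n = init n for n < h, and for n >= h
   s n = 1[ sum_{f=1}^h b f * s (n - f) - theta ] = (sum ... >= theta). *)
Definition lts_next (h : nat) (b : nat -> int) (theta : int)
  (init : nat -> bool) (n : nat) (hist : seq bool) : bool :=
  if n < h then init n
  else (theta <= \sum_(1 <= f < h.+1) b f * (Posz (nth false hist (n - f) : nat)))%R.

Fixpoint lts_hist (h : nat) (b : nat -> int) (theta : int)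
  (init : nat -> bool) (n : nat) : seq bool :=
  match n with
  | 0 => [::]
  | n'.+1 => let l := lts_hist h b theta init n' in
             rcons l (lts_next h b theta init n' l)
  end.

(* the n-th term of the recurrence (hist (n+1) lists s 0, ..., s n) *)
Definition lts (h : nat) (b : nat -> int) (theta : int)
  (init : nat -> bool) (n : nat) : bool :=
  nth false (lts_hist h b theta init n.+1) n.

Definition periodic_from (s : nat -> bool) (T P : nat) : Prop :=
  forall n, T <= n -> s (n + P) = s n.

Definition transient_length (s : nat -> bool) (T : nat) : Prop :=
  (exists P, 0 < P /\ periodic_from s T P) /\
  (forall T', (exists P, 0 < P /\ periodic_from s T' P) -> T <= T').

Definition cycle_length (s : nat -> bool) (T P : nat) : Prop :=
  0 < P /\ periodic_from s T P /\
  (forall P', 0 < P' -> periodic_from s T P' -> P <= P').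

(* primes p with 2m < p < 3m, in decreasing order: p_0 > p_1 > ... *)
Definition primes_list (m : nat) : seq nat :=
  [seq p <- rev (iota (2 * m).+1 (m.-1)) | prime p].

Definition rho (m : nat) : nat := size (primes_list m).
Definition pr (m i : nat) : nat := nth 0 (primes_list m) i.
Definition alpha (m i : nat) : nat := 3 * m - pr m i.
Definition kk (m : nat) : nat := (6 * m - 1) * rho m.
Definition mu (m i : nat) : nat := kk m %/ pr m i.
Definition beta (m i : nat) : nat := kk m - pr m i * mu m i.

(* weight attached to j = ell * p_i, 1 <= ell <= 2 rho *)
Definition weight_of_ell (m ell : nat) : int :=
  let r := rho m in
  if ~~ odd r then
    (if ell <= (3 * r) %/ 2 then (Posz 2) else (- 2)%R)
  else
    (if ell <= (3 * r).-1 %/ 2 then (Posz 2)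
     else if ell <= (2 * r - 2) then (- 2)%R else (- 1)%R).

(* abar j: if j = ell * p_i for some i < rho and 1 <= ell <= 2 rho
   (such i, ell are unique), the weight above, otherwise 0 *)
Definition abar (m j : nat) : int :=
  let P := fun p => (p %| j) && (0 < j %/ p <= 2 * rho m) in
  let i := find P (primes_list m) in
  if i < rho m then weight_of_ell m (j %/ pr m i) else 0%R.

Definition theta_bar (m : nat) : int := Posz (2 * rho m).

Definition x_init (m i t : nat) : bool :=
  [&& beta m i <= t, pr m i %| (t - beta m i) & (t - beta m i) %/ pr m i < mu m i].

Definition x (m i : nat) : nat -> bool :=
  lts (kk m) (abar m) (theta_bar m) (x_init m i).

Definition hh (m : nat) : nat := rho m * kk m.

Definition bw (m f : nat) : int :=
  if (rho m %| f) && (0 < f) then abar m (f %/ rho m) else 0%R.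

(* y : n = rho j + i with i < rho, so j = n / rho, i = n mod rho *)
Definition y_init (m n : nat) : bool := x m (n %% rho m) (n %/ rho m).+1.

Definition y (m : nat) : nat -> bool :=
  lts (hh m) (bw m) (theta_bar m) (y_init m).

Definition L1 (m d : nat) : nat := rho m * \big[lcmn/1]_(i < d.+1) pr m i.
Definition L0 (m d : nat) : nat :=
  if d < (rho m).-1 then rho m * \big[lcmn/1]_(d.+1 <= i < rho m) pr m i
  else 1.

Definition w_init (m d n : nat) : bool :=
  let i := n %% rho m in
  let j := n %/ rho m in
  if i <= d then
    (if j <= kk m - 2 then x m i j.+1 else ~~ x m i (kk m))
  else y m (n + L1 m d).

Definition w (m d : nat) : nat -> bool :=
  lts (hh m) (bw m) (theta_bar m) (w_init m d).

(* Main.v *)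
Require Import Defs.
From mathcomp Require Import all_boot all_order all_algebra zify.
Set Implicit Arguments. Unset Strict Implicit. Unset Printing Implicit Defensive.
Import Order.TTheory GRing.Theory Num.Theory.

Definition is_rec (h : nat) (b : nat -> int) (theta : int) (s : nat -> bool) :=
  forall n, h <= n -> s n = (theta <= \sum_(1 <= f < h.+1) b f * (Posz (s (n - f)%N : nat)))%R.

Lemma size_lts_hist h b th init n : size (lts_hist h b th init n) = n.
Proof. by elim: n => //= n IH; rewrite size_rcons IH. Qed.

Lemma nth_lts_hist h b th init n i : i < n ->
  nth false (lts_hist h b th init n) i = lts h b th init i.
Proof.
elim: n => // n IH; rewrite ltnS leq_eqVlt => /orP [/eqP -> | lt].
  by rewrite /lts.
by rewrite /= nth_rcons size_lts_hist lt IH.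
Qed.

Lemma lts_eq h b th init n : lts h b th init n =
  lts_next h b th init n (lts_hist h b th init n).
Proof. by rewrite /lts /= nth_rcons size_lts_hist ltnn eqxx. Qed.

Lemma lts_low h b th init n : n < h -> lts h b th init n = init n.
Proof. by move=> hn; rewrite lts_eq /lts_next hn. Qed.

Lemma lts_is_rec h b th init : is_rec h b th (lts h b th init).
Proof.
move=> n hn; rewrite lts_eq /lts_next ltnNge hn /=.
congr (_ <= _)%R; apply: eq_big_nat => f /andP [f1 fh].
by rewrite nth_lts_hist //; lia.
Qed.

Lemma rec_unique h b th s1 s2 : is_rec h b th s1 -> is_rec h b th s2 ->
  (forall n, n < h -> s1 n = s2 n) -> forall n, s1 n = s2 n.
Proof.
move=> r1 r2 lo n; elim: n {-2}n (leqnn n) => [|N IH] n hn.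
  case: (ltnP n h) => hh; first exact: lo.
  rewrite r1 // r2 //; congr (_ <= _)%R; apply: eq_big_nat => f /andP [f1 fh].
  lia.
case: (ltnP n h) => hh; first exact: lo.
rewrite r1 // r2 //; congr (_ <= _)%R; apply: eq_big_nat => f /andP [f1 fh].
by rewrite IH //; lia.
Qed.

Lemma rho_le m : rho m <= m.-1.
Proof.
rewrite /rho /primes_list size_filter; apply: leq_trans (count_size _ _) _.
by rewrite size_rev size_iota.
Qed.

Lemma pr_mem m i : i < rho m -> pr m i \in primes_list m.
Proof. by move=> hi; rewrite /pr mem_nth. Qed.

Lemma pr_prop m i : i < rho m ->
  [/\ prime (pr m i), 2 * m < pr m i & pr m i < 3 * m].
Proof.
move=> /pr_mem; rewrite /primes_list mem_filter mem_rev mem_iota => /andP [pp /andP [h1 h2]].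
split => //; lia.
Qed.

Lemma pr_inj m i j : i < rho m -> j < rho m -> pr m i = pr m j -> i = j.
Proof.
move=> hi hj e; apply/eqP; rewrite -(@nth_uniq _ 0 (primes_list m)) //.
  by rewrite -/(pr m i) -/(pr m j) e.
by rewrite filter_uniq // rev_uniq iota_uniq.
Qed.

Lemma pr_mono m i j : i <= j -> j < rho m -> pr m j <= pr m i.
Proof.
rewrite leq_eqVlt => /orP [/eqP -> // | lij hj].
have s : sorted (fun x y => y < x) (primes_list m).
  apply: sorted_filter; first by move=> a b c; lia.
  by rewrite rev_sorted iota_ltn_sorted.
have := @sorted_ltn_nth _ (fun x y => y < x) _ 0 _ s i j.
rewrite !inE => H; apply: ltnW; apply: H => //; [move=> a b c; lia | rewrite -/(rho m); lia].
Qed.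

Definition pre m n : int := (\sum_(1 <= l < n.+1) weight_of_ell m l)%R.

Definition preF m n : int :=
  let r := rho m in
  if ~~ odd r then (if n <= (3 * r) %/ 2 then Posz (2 * n) else (Posz (6 * r) - Posz (2 * n))%R)
  else (if n <= (3 * r).-1 %/ 2 then Posz (2 * n)
        else if n <= 2 * r - 2 then (Posz (6 * r) - 2 - Posz (2 * n))%R
        else (Posz (4 * r) - Posz n)%R).

Lemma pre_form m n : 2 <= rho m -> n <= 2 * rho m -> pre m n = preF m n.
Proof.
move=> hr; elim: n => [|n IH] hn.
  by rewrite /pre big_geq //= /preF; case: ifP.
rewrite /pre big_nat_recr //= -/(pre m n) IH; last lia.
rewrite /preF /weight_of_ell.
move: hn hr; have := odd_double_half (rho m); case: (odd (rho m)) => /= e hn hr.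
all: rewrite -muln2 in e.
all: repeat case: ifP => ?; lia.
Qed.

Lemma pre_total m : 2 <= rho m -> pre m (2 * rho m) = Posz (2 * rho m).
Proof.
move=> hr; rewrite pre_form // /preF.
move: hr; have := odd_double_half (rho m); case: (odd (rho m)) => /= e hr.
all: rewrite -muln2 in e.
all: repeat case: ifP => ?; lia.
Qed.

Lemma pre_ge2 m n : 2 <= rho m -> 1 <= n <= 2 * rho m -> (2 <= pre m n)%R.
Proof.
move=> hr hn; rewrite pre_form //; last lia; rewrite /preF.
move: hr hn; have := odd_double_half (rho m); case: (odd (rho m)) => /= e hr hn.
all: rewrite -muln2 in e.
all: repeat case: ifP => ?; lia.
Qed.

Lemma wt_le2 m l : (weight_of_ell m l <= 2)%R.
Proof. by rewrite /weight_of_ell; repeat case: ifP. Qed.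

Lemma tail_bound m (c : nat -> bool) n : 2 <= rho m ->
  c 1 = false -> (forall l l', l <= l' -> c l -> c l') ->
  1 <= n <= 2 * rho m ->
  (\sum_(1 <= l < n.+1) weight_of_ell m l * Posz (c l : nat) <= pre m n - 2)%R.
Proof.
move=> hr c1 mono; elim: n => [|n IH] hn; first lia.
case cn: (c n.+1).
  have n1 : 1 <= n by case: n {IH hn} cn => //; rewrite c1.
  have -> : pre m n.+1 = (pre m n + weight_of_ell m n.+1)%R by rewrite /pre big_nat_recr.
  rewrite big_nat_recr //= cn mulr1.
  have H : forall S P W : int, (S <= P - 2)%R -> (S + W <= P + W - 2)%R by move=> *; lia.
  exact: H (IH ltac:(lia)).
rewrite big1_seq; last first.
  move=> l; rewrite mem_index_iota => hl.
  case cl: (c l); last by rewrite mulr0.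
  by rewrite (mono l n.+1) in cn => //; lia.
have := pre_ge2 hr hn; lia.
Qed.

Lemma sum_pick (g : nat -> int) a b c :
  (\sum_(a <= f < b) (if f == c then g f else 0) = if (a <= c < b)%N then g c else 0)%R.
Proof.
by rewrite -big_mkcond /= big_nat1_eq.
Qed.

Lemma ell_lt_pr m i l : i < rho m -> l <= 2 * rho m -> l < pr m i.
Proof. move=> hi hl; have [_ h1 _] := pr_prop hi; have := rho_le m; lia. Qed.

Lemma abar_pointwise m f : 
  abar m f = (\sum_(i < rho m) \sum_(1 <= l < (2 * rho m).+1)
                (if f == (l * pr m i)%N then weight_of_ell m l else 0))%R.
Proof.
rewrite /abar /=.
set P := (fun p => (p %| f) && (0 < f %/ p <= 2 * rho m)).
case: ifP => hf.
  set i0 := find P (primes_list m).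
  have Pp0 : P (pr m i0) by apply: nth_find; rewrite has_find.
  move: (Pp0); rewrite /P => /andP [dv /andP [l0pos l0le]].
  have [pp0 _ _] := pr_prop hf.
  have fe : f = f %/ pr m i0 * pr m i0 by rewrite divnK.
  set l0 := f %/ pr m i0.
  rewrite (bigD1 (Ordinal hf)) //=.
  rewrite (eq_bigr (fun l => if l == l0 then weight_of_ell m l else 0)%R); last first.
    by move=> l _; rewrite {1}fe eqn_pmul2r ?prime_gt0 // eq_sym.
  rewrite sum_pick ifT; last by lia.
  rewrite big1 ?addr0 //= => i hi.
  rewrite big1_seq // => l; rewrite mem_index_iota => hl.
  case: eqP => // e; exfalso.
  have [pq _ _] := pr_prop (ltn_ord i).
  have : pr m i %| l0 * pr m i0 by rewrite -fe e dvdn_mull.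
  rewrite Euclid_dvdM // => /orP [d1 | d2].
    have := dvdn_leq l0pos d1; have := ell_lt_pr (ltn_ord i) l0le; lia.
  move: d2; rewrite dvdn_prime2 // => /eqP e2.
  have := pr_inj (ltn_ord i) hf e2; move=> e3; move: hi; rewrite -val_eqE /= e3 eqxx //.
rewrite big1 // => i _; rewrite big1_seq // => l; rewrite mem_index_iota => hl.
case: eqP => // e; exfalso.
have : has P (primes_list m).
  apply/hasP; exists (pr m i); first exact: pr_mem.
  have [pq _ _] := pr_prop (ltn_ord i).
  rewrite /P e dvdn_mull // (mulnK _ (prime_gt0 pq)) /=; lia.
by move=> H; move: hf; rewrite -[rho m]/(size (primes_list m)) -has_find H.
Qed.

Lemma aux_kk r m : 2 * r * (3 * m).-1 <= (6 * m - 1) * r.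
Proof. case: m => [|M]; first by rewrite !muln0.
have -> : (3 * M.+1).-1 = 3 * M + 2 by lia.
have -> : 6 * M.+1 - 1 = 6 * M + 5 by lia.
rewrite !mulnDr !mulnDl; nia. Qed.

Lemma lp_range m i l : i < rho m -> 1 <= l <= 2 * rho m ->
  1 <= l * pr m i <= kk m.
Proof.
move=> hi hl; have [pp h1 h2] := pr_prop hi.
have a : l * pr m i <= 2 * rho m * pr m i by rewrite leq_mul2r; lia.
have b : 2 * rho m * pr m i <= 2 * rho m * (3 * m).-1 by rewrite leq_mul2l; lia.
rewrite /kk; apply/andP; split; first by have := prime_gt0 pp; rewrite muln_gt0 => ->; lia.
apply: leq_trans a _; apply: leq_trans b _; exact: aux_kk.
Qed.

Lemma abar_decomp m (F : nat -> int) :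
  (\sum_(1 <= f < (kk m).+1) abar m f * F f =
   \sum_(i < rho m) \sum_(1 <= l < (2 * rho m).+1) weight_of_ell m l * F (l * pr m i)%N)%R.
Proof.
under eq_bigr => f _ do rewrite abar_pointwise mulr_suml.
under eq_bigr => f _ do under eq_bigr => i _ do rewrite mulr_suml.
rewrite exchange_big /=; apply: eq_bigr => i _.
rewrite exchange_big /=; apply: eq_big_nat => l hl.
rewrite (eq_bigr (fun f => if f == (l * pr m i)%N then weight_of_ell m l * F f else 0)%R); last first.
  by move=> f _; case: ifP; rewrite ?mul0r.
by rewrite sum_pick ifT // ltnS; apply: lp_range => //.
Qed.

Definition G m i (per : bool) (a : nat) (t : nat) : bool :=
  ((t + a) %% pr m i == beta m i) && (per || (t + pr m i < kk m)).

Lemma at_most_one (c : nat -> bool) a b :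
  (forall l1 l2, a <= l1 < b -> a <= l2 < b -> c l1 -> c l2 -> l1 = l2) ->
  (\sum_(a <= l < b) Posz (c l : nat) <= 1)%R.
Proof.
move=> uq; case hc: (has c (index_iota a b)).
  move/hasP: hc => [l0 hl0 cl0]; move: (hl0); rewrite mem_index_iota => hl0'.
  rewrite (eq_big_nat _ _ (F2 := fun l => if l == l0 then (1:int) else 0)%R); last first.
    move=> l hl; case: eqP => [-> | ne]; first by rewrite cl0.
    by case cl: (c l) => //; exfalso; apply: ne; apply: uq.
  by rewrite sum_pick; case: ifP.
rewrite big1_seq // => l hl; move/hasPn: hc => /(_ l hl); by case: (c l).
Qed.

Lemma beta_lt m i : i < rho m -> beta m i < pr m i.
Proof.
move=> hi; have [pp _ _] := pr_prop hi.
rewrite /beta /mu {1}(divn_eq (kk m) (pr m i)) mulnC addKn ltn_mod prime_gt0 //.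
Qed.

Lemma beta_mod m i : i < rho m -> beta m i = kk m %% pr m i.
Proof.
move=> hi; rewrite /beta /mu {1}(divn_eq (kk m) (pr m i)) mulnC addKn //.
Qed.

Lemma mod_shift x y l p : x + l * p = y -> x %% p = y %% p.
Proof. by move=> <-; rewrite addnC modnMDl. Qed.

Lemma ndvd_other m i i' : i < rho m -> i' < rho m -> i != i' -> ~~ (pr m i %| pr m i').
Proof.
move=> hi hi' ne; have [p1 _ _] := pr_prop hi; have [p2 _ _] := pr_prop hi'.
rewrite dvdn_prime2 //; apply/negP => /eqP e; move/negP: ne; apply; apply/eqP.
exact: pr_inj hi hi' e.
Qed.

Lemma no_dvd_lq m i i' l : i < rho m -> i' < rho m -> i != i' ->
  1 <= l <= 2 * rho m -> ~~ (pr m i %| l * pr m i').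
Proof.
move=> hi hi' ne hl; have [p1 _ _] := pr_prop hi.
rewrite Euclid_dvdM // negb_or ndvd_other // andbT.
apply/negP => d; have := dvdn_leq (ltac:(lia) : 0 < l) d; have := ell_lt_pr hi (ltac:(lia) : l <= 2 * rho m); lia.
Qed.

Lemma G_rec m i per a : 2 <= rho m -> i < rho m ->
  is_rec (kk m) (abar m) (theta_bar m) (G m i per a).
Proof.
move=> hr hi t ht.
have [pp p2m p3m] := pr_prop hi.
rewrite (abar_decomp m (fun f => Posz (G m i per a (t - f)%N : nat))).
rewrite (bigD1 (Ordinal hi)) //=.
have lq i' l : i' < rho m -> 1 <= l <= 2 * rho m -> l * pr m i' <= t.
  by move=> hi' hl; have := lp_range hi' hl; lia.
have own l : 1 <= l <= 2 * rho m ->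
    ((t - l * pr m i + a) %% pr m i = (t + a) %% pr m i).
  move=> hl; apply: (@mod_shift _ _ l); have := lq _ _ hi hl; lia.
case: (boolP ((t + a) %% pr m i == beta m i)) => hres.
- (* cross terms vanish *)
  rewrite [X in (_ + X)%R]big1 ?addr0; last first.
    move=> i' hi'; rewrite big1_seq // => l; rewrite mem_index_iota => hl.
    rewrite /G; case e: ((t - l * pr m i' + a) %% pr m i == beta m i) => /=; last by rewrite mulr0.
    exfalso; have hl' : 1 <= l <= 2 * rho m by lia.
    have ne : i != i' by move: hi'; rewrite eq_sym -val_eqE /=.
    have := no_dvd_lq hi (ltn_ord i') ne hl'.
    have : (t + a == t - l * pr m i' + a %[mod pr m i]) by rewrite (eqP hres) (eqP e).
    rewrite eqn_mod_dvd; last lia.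
    have -> : t + a - (t - l * pr m i' + a) = l * pr m i' by have := lq _ _ (ltn_ord i') hl'; lia.
    by move=> ->.
  under eq_big_nat => l hl do rewrite /G own // hres /=.
  rewrite /G hres /=.
  case: per.
  + under eq_big_nat => l hl do rewrite /= mulr1.
    by rewrite -/(pre m (2 * rho m)) pre_total // /theta_bar lexx.
  + have -> : (t + pr m i < kk m) = false by lia.
    apply/esym/negbTE; rewrite -ltNge /theta_bar.
    apply: (le_lt_trans (tail_bound (c := fun l => t - l * pr m i + pr m i < kk m) hr _ _ _)).
    * rewrite mul1n; lia.
    * move=> l l' ll' /=; have := leq_mul2r (pr m i) l l'; rewrite ll' orbT.
      move: (l * pr m i) (l' * pr m i) => x y; lia.
    * lia.
    * rewrite pre_total //; lia.
- (* own term vanishes *)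
  rewrite big1_seq ?add0r; last first.
    move=> l; rewrite mem_index_iota => hl; rewrite /G own; last by clear -hl; lia.
    by rewrite (negbTE hres) mulr0.
  rewrite /G (negbTE hres) /=.
  apply/esym/negbTE; rewrite -ltNge /theta_bar.
  have each : forall i' : 'I_(rho m), i' != Ordinal hi ->
    (\sum_(1 <= l < (2 * rho m).+1) weight_of_ell m l * Posz (G m i per a (t - l * pr m i')%N : nat) <= 2)%R.
    move=> i' hi'.
    apply: (le_trans (y := (2 * \sum_(1 <= l < (2 * rho m).+1) Posz (G m i per a (t - l * pr m i')%N : nat))%R)).
      rewrite mulr_sumr; apply: ler_sum => l _.
      case: (G _ _ _ _ _) => /=; rewrite ?mulr1 ?mulr0 ?wt_le2 //.
    have : (\sum_(1 <= l < (2 * rho m).+1) Posz (G m i per a (t - l * pr m i')%N : nat) <= 1)%R.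
      apply: at_most_one => l1 l2 h1 h2.
      rewrite /G => /andP [e1 _] /andP [e2 _].
      have hl1 : 1 <= l1 <= 2 * rho m by clear -h1; lia.
      have hl2 : 1 <= l2 <= 2 * rho m by clear -h2; lia.
      have q1 := lq _ _ (ltn_ord i') hl1; have q2 := lq _ _ (ltn_ord i') hl2.
      have ne : i != i' by move: hi'; rewrite eq_sym -val_eqE /=.
      wlog le12 : l1 l2 e1 e2 h1 h2 hl1 hl2 q1 q2 / l1 <= l2.
        move=> H; case: (leqP l1 l2) => c; first exact: H.
        by apply/esym; apply: H => //; apply: ltnW.
      case: (ltngtP l1 l2) => // c; last by exfalso; clear -le12 c; lia.
      exfalso.
      have : (t - l1 * pr m i' + a == t - l2 * pr m i' + a %[mod pr m i]) by rewrite (eqP e1) (eqP e2).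
      rewrite eqn_mod_dvd; last first.
        have := leq_mul2r (pr m i') l1 l2; rewrite le12 orbT; move: q1 q2; move: (l1 * _) (l2 * _) => x y; clear -le12; lia.
      have -> : t - l1 * pr m i' + a - (t - l2 * pr m i' + a) = (l2 - l1) * pr m i'.
        rewrite mulnBl; have := leq_mul2r (pr m i') l1 l2; rewrite le12 orbT; move: q1 q2; move: (l1 * _) (l2 * _) => x y; clear -le12; lia.
      have hl : 1 <= l2 - l1 <= 2 * rho m by clear -hl1 hl2 c; lia.
      by rewrite (negbTE (no_dvd_lq hi (ltn_ord i') ne hl)).
    have H : forall S : int, (S <= 1)%R -> (2 * S <= 2)%R by move=> S hS; clear -hS; lia.
    exact: H.
  apply: (le_lt_trans (ler_sum _ each)).
  have : (\sum_(i' < rho m) (2:int) = 2 + \sum_(i' < rho m | i' != Ordinal hi) 2)%R by rewrite (bigD1 (Ordinal hi)).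
  rewrite sumr_const card_ord => e.
  have e2 : (2 *+ rho m = Posz (2 * rho m))%R by elim: (rho m) => // n IH; rewrite mulrS IH mulnS PoszD.
  have H : forall (n : nat) (Y : int), Posz n = (2 + Y)%R -> (Y < Posz n)%R by move=> n Y hY; clear -hY; lia.
  by apply: H; rewrite -e2 e.
Qed.

Lemma reindex (r k : nat) (F : nat -> int) : 0 < r ->
  (forall f, ~~ (r %| f) -> F f = 0%R) ->
  (\sum_(1 <= f < (r * k).+1) F f = \sum_(1 <= j < k.+1) F (r * j)%N)%R.
Proof.
move=> r0 hF; elim: k => [|k IH]; first by rewrite muln0 !big_geq.
rewrite [in RHS]big_nat_recr //= -IH.
rewrite (big_cat_nat (n := (r * k).+1)) //=; last by rewrite ltnS leq_mul2l leqnSn orbT.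
congr (_ + _)%R.
have e : (r * k.+1).+1 = (r * k + r).+1 by rewrite mulnS addnC.
rewrite e big_nat_recr /=; last by lia.
rewrite big1_seq ?add0r; first by rewrite mulnS addnC.
move=> f; rewrite mem_index_iota => hf.
apply: hF; apply/negP => d.
have : r %| f - r * k by rewrite dvdn_sub // dvdn_mulr.
move/(dvdn_leq (ltac:(lia) : 0 < f - r * k)); lia.
Qed.

Lemma component m s i : 0 < rho m -> i < rho m ->
  is_rec (hh m) (bw m) (theta_bar m) s ->
  is_rec (kk m) (abar m) (theta_bar m) (fun j => s (rho m * j + i)).
Proof.
move=> r0 hi rs j hj.
rewrite rs; last by rewrite /hh; have := leq_mul2l (rho m) (kk m) j; rewrite hj orbT; lia.
congr (_ <= _)%R.
rewrite /hh (@reindex (rho m) (kk m) (fun f => bw m f * Posz (s (rho m * j + i - f)%N : nat))%R) //; last first.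
  by move=> f hf; rewrite /bw (negbTE hf) mul0r.
apply: eq_big_nat => f hf.
rewrite /bw dvdn_mulr // muln_gt0 r0 /= (_ : 0 < f) ?mulKn //; last by lia.
congr (_ * Posz (nat_of_bool (s _)))%R.
have : rho m * f <= rho m * j by rewrite leq_mul2l; apply/orP; right; lia.
rewrite mulnBr; lia.
Qed.

Lemma kk_decomp m i : i < rho m -> kk m = mu m i * pr m i + beta m i.
Proof. move=> hi; rewrite beta_mod // /mu; exact: divn_eq. Qed.

Lemma x_init_eq m i t : i < rho m -> t < kk m ->
  x_init m i t = (t %% pr m i == beta m i).
Proof.
move=> hi ht; have [pp _ _] := pr_prop hi; have p0 := prime_gt0 pp.
have bl := beta_lt hi; have kd := kk_decomp hi.
rewrite /x_init; case: eqP => e.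
- have te := divn_eq t (pr m i); rewrite e in te.
  move: (t %/ pr m i) te => q te.
  move: kd; move: (mu m i) => u kd.
  have -> : beta m i <= t by lia.
  have -> : t - beta m i = q * pr m i by lia.
  rewrite dvdn_mull //= mulnK //.
  rewrite -(ltn_pmul2r p0); lia.
- apply/negP => /and3P [h1 h2 _]; apply: e.
  have -> : t = (t - beta m i) + beta m i by lia.
  by rewrite -modnDm (eqP h2) add0n !modn_mod modn_small.
Qed.

Lemma x_eq m i : 2 <= rho m -> i < rho m -> forall t, x m i t = G m i true 0 t.
Proof.
move=> hr hi; apply: rec_unique; first exact: lts_is_rec.
  exact: G_rec.
move=> n hn; rewrite /x lts_low // x_init_eq // /G addn0 andbT //.
Qed.

Lemma divmod_r r j i : i < r -> (r * j + i) %/ r = j /\ (r * j + i) %% r = i.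
Proof.
move=> hi; have r0 : 0 < r by lia.
split; first by rewrite mulnC divnMDl // divn_small // addn0.
by rewrite mulnC modnMDl modn_small.
Qed.

Lemma y_eq m i : 2 <= rho m -> i < rho m -> forall j, y m (rho m * j + i) = G m i true 1 j.
Proof.
move=> hr hi.
have r0 : 0 < rho m by lia.
apply: (rec_unique (component r0 hi (@lts_is_rec _ _ _ _))); first exact: G_rec.
move=> j hj /=; rewrite lts_low; last first.
  rewrite /hh; have := leq_mul2l (rho m) j.+1 (kk m); rewrite hj orbT mulnS; lia.
have [e1 e2] := divmod_r j hi.
by rewrite /y_init e1 e2 x_eq // /G addn0 addn1.
Qed.

Lemma mod_gap x y p : 0 < p -> x %% p = y %% p -> x < y -> x + p <= y.
Proof.
move=> p0 e lt; have dx := divn_eq x p; have dy := divn_eq y p.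
move: dx dy; rewrite e; move: (x %/ p) (y %/ p) (y %% p) => u v r dx dy.
have : u * p < v * p by lia.
rewrite ltn_pmul2r // => uv.
have : u.+1 * p <= v * p by rewrite leq_pmul2r.
rewrite mulSn; lia.
Qed.

Definition lcm1 m d := \big[lcmn/1]_(i < d.+1) pr m i.
Definition lcm0 m d := \big[lcmn/1]_(d.+1 <= i < rho m) pr m i.

Definition W m d i j :=
  if i <= d then G m i false 1 j else G m i true (lcm1 m d + 1) j.

Lemma w_eq m d : 2 <= rho m -> d < rho m -> forall i, i < rho m ->
  forall j, w m d (rho m * j + i) = W m d i j.
Proof.
move=> hr hd i hi.
have r0 : 0 < rho m by lia.
have [pp _ _] := pr_prop hi; have p0 := prime_gt0 pp.
apply: (rec_unique (component r0 hi (@lts_is_rec _ _ _ _))).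
  by rewrite /W; case: (i <= d); apply: G_rec.
move=> j hj /=; rewrite lts_low; last first.
  rewrite /hh; have := leq_mul2l (rho m) j.+1 (kk m); rewrite hj orbT mulnS; lia.
have [e1 e2] := divmod_r j hi.
rewrite /w_init e1 e2 /W.
case: ifP => hid.
- rewrite !x_eq // /G !addn0 !andbT addn1.
  case: ifP => hjk.
  + case: eqP => //= e; symmetry.
    have := mod_gap p0 (x := j.+1) (y := kk m); rewrite e -beta_mod // => H.
    have kp := lp_range hi (ltac:(lia) : 1 <= 1 <= 2 * rho m); rewrite mul1n in kp.
    have := H erefl; clear -hjk hj kp pp p0; have := prime_gt1 pp; lia.
  + rewrite -beta_mod // eqxx /=; symmetry; apply/negbTE; apply/andP => [[_ h]].
    by clear -hjk hj h p0; lia.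
- rewrite /L1 -/(lcm1 m d).
  have -> : rho m * j + i + rho m * lcm1 m d = rho m * (j + lcm1 m d) + i by rewrite mulnDr; lia.
  by rewrite y_eq // /G addnA.
Qed.

Lemma w_W m d n : 2 <= rho m -> d < rho m -> w m d n = W m d (n %% rho m) (n %/ rho m).
Proof.
move=> hr hd; rewrite -w_eq //; last by rewrite ltn_mod; lia.
by rewrite mulnC -divn_eq.
Qed.

Lemma pk m i : i < rho m -> 2 * pr m i <= kk m.
Proof.
move=> hi; have := lp_range hi (ltac:(lia) : 1 <= 2 <= 2 * rho m); lia.
Qed.

Lemma W_zero m d i j : d < rho m -> i <= d -> kk m <= j + pr m d -> W m d i j = false.
Proof.
move=> hd hid hj; rewrite /W hid /G /=.
have := pr_mono hid hd; move=> h; apply/negbTE; rewrite negb_and; apply/orP; right; lia.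
Qed.

Lemma W_one m d : d < rho m -> W m d d (kk m - pr m d - 1) = true.
Proof.
move=> hd; have [pp _ _] := pr_prop hd; have p1 := prime_gt1 pp; have := pk hd => h2.
rewrite /W leqnn /G /=; apply/andP; split; last lia.
rewrite beta_mod //; apply/eqP; apply: (@mod_shift _ _ 1); lia.
Qed.

Lemma W_per m d i j c : i < rho m -> d < i -> pr m i %| c -> W m d i (j + c) = W m d i j.
Proof.
move=> hi hdi dc; rewrite /W leqNgt hdi /G /= !andbT.
rewrite (@mod_shift (j + (lcm1 m d + 1)) (j + c + (lcm1 m d + 1)) (c %/ pr m i)) //.
by rewrite divnK //; lia.
Qed.

Lemma W_inf m d i J : i < rho m -> d < i -> exists j, J <= j /\ W m d i j = true.
Proof.
move=> hi hdi; have [pp _ _] := pr_prop hi; have p0 := prime_gt0 pp.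
have bl := beta_lt hi.
set s := lcm1 m d + 1; set p := pr m i.
exists (J * p + (beta m i + p - s %% p)); split.
  have : J <= J * p by rewrite leq_pmulr.
  lia.
rewrite /W leqNgt hdi /G /= andbT; apply/eqP.
have ds := divn_eq s p; have ml := ltn_pmod s p0.
have -> : J * p + (beta m i + p - s %% p) + s = beta m i + (J + 1 + s %/ p) * p.
  rewrite !mulnDl mul1n; move: ds ml; move: (s %/ p) (s %% p) => u v; lia.
by rewrite addnC modnMDl modn_small.
Qed.

Lemma dvd_lcm0 m d i : d < i < rho m -> pr m i %| lcm0 m d.
Proof.
move=> hi; rewrite /lcm0 (big_rem i) /=; first exact: dvdn_lcml.
by rewrite mem_index_iota.
Qed.

Lemma lcm0_dvd m d q : (forall i, d < i < rho m -> pr m i %| q) -> lcm0 m d %| q.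
Proof.
move=> H; rewrite /lcm0 big_seq_cond; apply: (big_ind (fun x => x %| q)) => //.
  by move=> x y hx hy; rewrite dvdn_lcm hx hy.
move=> i; rewrite mem_index_iota andbT => hi; exact: H.
Qed.

Lemma lcm0_gt0 m d : 0 < lcm0 m d.
Proof.
rewrite /lcm0 big_seq_cond; apply: (big_ind (fun x => 0 < x)) => //.
  by move=> x y hx hy; rewrite lcmn_gt0 hx hy.
move=> i; rewrite mem_index_iota andbT => hi.
have [pp _ _] := pr_prop (ltac:(lia) : i < rho m); exact: prime_gt0.
Qed.

Lemma iter_per s T P : periodic_from s T P -> forall c n, T <= n -> s (n + c * P) = s n.
Proof.
move=> hp; elim=> [|c IH] n hn; first by rewrite mul0n addn0.
have -> : n + c.+1 * P = n + c * P + P by rewrite mulSn; lia.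
by rewrite hp ?IH //; lia.
Qed.

Lemma zero_tail m d n : 2 <= rho m -> d < rho m ->
  rho m * (kk m - pr m d - 1) + d + 1 <= n -> n %% rho m <= d -> w m d n = false.
Proof.
move=> hr hd hn hi; rewrite w_W //; apply: W_zero => //.
have dn := divn_eq n (rho m).
case: (leqP (kk m) (n %/ rho m + pr m d)) => // c; exfalso.
have : rho m * (n %/ rho m) <= rho m * (kk m - pr m d - 1) by rewrite leq_mul2l; apply/orP; right; lia.
rewrite [_ * (n %/ _)]mulnC.
move: dn hn hi; move: (n %/ rho m * rho m) (n %% rho m) (rho m * (kk m - pr m d - 1)) => u v z.
lia.
Qed.

Lemma comp_shift r n c : 0 < r -> (n + r * c) %% r = n %% r /\ (n + r * c) %/ r = n %/ r + c.
Proof.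
move=> r0; split; first by rewrite addnC mulnC modnMDl.
by rewrite addnC mulnC divnMDl // addnC.
Qed.

Lemma per_L0 m d : 2 <= rho m -> d < rho m ->
  periodic_from (w m d) (rho m * (kk m - pr m d - 1) + d + 1) (L0 m d).
Proof.
move=> hr hd n hn.
have r0 : 0 < rho m by lia.
case: (leqP (n %% rho m) d) => hi.
  rewrite (zero_tail hr hd hn hi); apply: zero_tail => //; first lia.
  rewrite /L0; case: ifP => hdr.
    by have [-> _] := comp_shift n (\big[lcmn/1]_(d.+1 <= i < rho m) pr m i) r0.
  have := ltn_mod (n + 1) (rho m); rewrite r0; lia.
have hdr : d < (rho m).-1 by have := ltn_mod n (rho m); rewrite r0; lia.
rewrite /L0 hdr -/(lcm0 m d) !w_W //.
have [-> ->] := comp_shift n (lcm0 m d) r0.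
apply: W_per => //; first by rewrite ltn_mod.
apply: dvd_lcm0; rewrite hi ltn_mod r0 //.
Qed.

Lemma T_le m d j i : d < rho m -> kk m <= j ->
  rho m * (kk m - pr m d - 1) + d + 1 <= rho m * j + i.
Proof.
move=> hd hj.
have a : rho m * (kk m - pr m d - 1) + rho m <= rho m * kk m.
  rewrite -mulnSr leq_mul2l; apply/orP; right; have := pk hd; have [pp _ _] := pr_prop hd; have := prime_gt0 pp; lia.
have b : rho m * kk m <= rho m * j by rewrite leq_mul2l hj orbT.
move: a b; move: (rho m * (kk m - pr m d - 1)) (rho m * kk m) (rho m * j) => x y z; lia.
Qed.

Unset Implicit Arguments.

Theorem lemma13 (m : nat) (hm : 0 < m) (hrho : 2 <= rho m) (d : nat) (hd : d < rho m) :
  transient_length (w m d) (rho m * (kk m - pr m d - 1) + d + 1) /\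
  cycle_length (w m d) (rho m * (kk m - pr m d - 1) + d + 1) (L0 m d).
Proof.
have r0 : 0 < rho m by lia.
have [pp _ _] := pr_prop hd; have p1 := prime_gt1 pp; have k2 := pk hd.
have per := per_L0 hrho hd.
have L0pos : 0 < L0 m d.
  by rewrite /L0; case: ifP => _ //; rewrite muln_gt0 r0 -/(lcm0 m d) lcm0_gt0.
have n0one : w m d (rho m * (kk m - pr m d - 1) + d) = true by rewrite w_eq // W_one.
split.
- split; first by exists (L0 m d).
  move=> T' [P [P0 hP]]; rewrite leqNgt; apply/negP => lt.
  have H := iter_per hP (rho m) (n := rho m * (kk m - pr m d - 1) + d) ltac:(lia).
  have Z : w m d (rho m * (kk m - pr m d - 1 + P) + d) = false.
    rewrite w_eq //; apply: W_zero => //; lia.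
  have e : rho m * (kk m - pr m d - 1) + d + rho m * P = rho m * (kk m - pr m d - 1 + P) + d.
    by rewrite mulnDr; lia.
  by move: H; rewrite e Z n0one.
- split => //; split => //.
  move=> P' P0 hP.
  rewrite /L0; case: ifP => hdr; last by [].
  rewrite -/(lcm0 m d).
  have dP := divn_eq P' (rho m).
  have cl := ltn_mod P' (rho m); rewrite r0 in cl.
  move: dP cl; move: (P' %/ rho m) (P' %% rho m) => q c dP cl.
  case: (posnP c) => c0.
  + rewrite c0 addn0 in dP.
    have q0 : 0 < q by move: dP P0; case: q => //; lia.
    have dq : lcm0 m d %| q.
      apply: lcm0_dvd => i /andP [hi1 hi2].
      have [j [hj Wj]] := @W_inf _ _ _ (kk m) hi2 hi1.
      have := hP (rho m * j + i) (T_le _ hd hj).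
      have -> : rho m * j + i + P' = rho m * (j + q) + i by rewrite dP mulnDr; lia.
      rewrite !w_eq // Wj; move: Wj.
      rewrite /W leqNgt hi1 /G /= !andbT => /eqP e1 /eqP e2.
      have : (j + (lcm1 m d + 1)) + q == (j + (lcm1 m d + 1)) + 0 %[mod pr m i].
        by rewrite addn0 addnAC e1 e2.
      by rewrite eqn_modDl mod0n => h; exact: h.
    have := dvdn_leq q0 dq; rewrite dP => h.
    by rewrite mulnC leq_mul2r h orbT.
  + exfalso.
    case: (leqP c d) => hc.
    * have hi1 : d < (rho m).-1 by lia.
      have hi2 : (rho m).-1 < rho m by lia.
      have [j [hj Wj]] := @W_inf _ _ _ (kk m) hi2 hi1.
      have := hP (rho m * j + (rho m).-1) (T_le _ hd hj).
      have -> : rho m * j + (rho m).-1 + P' = rho m * (j + q + 1) + c.-1.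
        rewrite dP !mulnDr muln1 [rho m * q]mulnC; move: (rho m * j) (q * rho m) => x y; lia.
      rewrite !w_eq //; last lia.
      by rewrite Wj W_zero //; lia.
    * have [j' [hj Wj]] := @W_inf _ _ _ (kk m + q) cl hc.
      have := hP (rho m * (j' - q) + 0) (T_le _ hd (ltac:(lia) : kk m <= j' - q)).
      have -> : rho m * (j' - q) + 0 + P' = rho m * j' + c.
        rewrite dP addn0 mulnBr mulnC.
        have : q * rho m <= j' * rho m by rewrite leq_mul2r; apply/orP; right; lia.
        rewrite [rho m * q]mulnC; move: (q * rho m) (j' * rho m) => x y; lia.
      rewrite !w_eq // Wj W_zero //; lia.
Qed.
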